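(* Every strong partial metric space is $T_1$: if $s$ is a strong partial metric on a set $X$ and $\mathcal{T}$ is the topology on $X$ generated by the basis of $s$-open balls $B^s_\epsilon(x)=\{y\in X\mid s(x,y)-s(x,x)<\epsilon\}$ ($x\in X$, $\epsilon>0$), then for any two distinct $x,y\in X$ there exist open sets $U,V\in\mathcal{T}$ with $x\in U$, $y\notin U$, $y\in V$, $x\notin V$.
   Context: A strong partial metric on $X$ is a function $s:X\times X\to\mathbb{R}$ such that for all $x,y,z\in X$: $s(x,x)<s(x,y)$ whenever $x\ne y$; $s(x,y)=s(y,x)$; and $s(x,y)\le s(x,z)+s(z,y)-s(z,z)$. The $s$-open balls form a basis of a topology on $X$. *)

(* Defs.v *)
From Stdlib Require Import Reals.
Open Scope R_scope.

Definition strong_partial_metric {X : Type} (s : X -> X -> R) : Prop :=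
  (forall x y : X, x <> y -> s x x < s x y) /\
  (forall x y : X, s x y = s y x) /\
  (forall x y z : X, s x y <= s x z + s z y - s z z).

Definition sball {X : Type} (s : X -> X -> R) (x : X) (eps : R) : X -> Prop :=
  fun y => s x y - s x x < eps.

(* Open sets of the topology generated by the basis of s-open balls:
   U is open iff U is a union of balls, i.e. every point of U lies in
   some ball (with positive radius) contained in U. *)
Definition sopen {X : Type} (s : X -> X -> R) (U : X -> Prop) : Prop :=
  forall p : X, U p ->
    exists (z : X) (eps : R), 0 < eps /\ sball s z eps p /\
      (forall q : X, sball s z eps q -> U q).

(* Main.v *)
Require Import Defs.
From Stdlib Require Import Reals Lra.
Open Scope R_scope.

Lemma ball_open {X : Type} (s : X -> X -> R) z e : 0 < e -> sopen s (sball s z e).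
Proof. intros He p Hp. exists z, e. auto. Qed.

Theorem lemma3p12 (X : Type) (s : X -> X -> R) :
  strong_partial_metric s ->
  forall x y : X, x <> y ->
    exists U V : X -> Prop,
      sopen s U /\ sopen s V /\ U x /\ ~ U y /\ V y /\ ~ V x.
Proof.
  intros [H1 [H2 H3]] x y Hxy.
  assert (A := H1 x y Hxy).
  assert (B := H1 y x (not_eq_sym Hxy)).
  exists (sball s x (s x y - s x x)), (sball s y (s y x - s y y)).
  unfold sball; repeat split; try apply ball_open; lra.
Qed.
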